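(* Let $n=2$ agents have additive valuations over a finite set $G$ of indivisible goods. Then there exists a probability distribution over (complete) allocations that is ex-ante EF and ex-post EFX. *)

(* Defs.v *)
From HB Require Import structures.
From mathcomp Require Import all_boot all_order all_algebra.
Set Implicit Arguments. Unset Strict Implicit. Unset Printing Implicit Defensive.
Import Order.TTheory GRing.Theory Num.Theory.
Local Open Scope ring_scope.

Definition allocation (n : nat) (G : finType) := {ffun G -> 'I_n}.

Definition bundle (n : nat) (G : finType) (A : allocation n G) (i : 'I_n) : {set G} :=
  [set g | A g == i].

(* An additive valuation is given by nonnegative values of single goods;
   the value of a bundle is the sum of the values of its goods. *)
Definition nonneg_valuation (R : numDomainType) (G : finType) (v : G -> R) : Prop :=
  forall g, 0 <= v g.

Definition val_set (R : numDomainType) (G : finType) (v : G -> R) (S : {set G}) : R :=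
  \sum_(g in S) v g.

Definition EFX (R : numDomainType) (n : nat) (G : finType)
    (v : 'I_n -> G -> R) (A : allocation n G) : Prop :=
  forall i j : 'I_n, forall g, g \in bundle A j ->
    val_set (v i) (bundle A j :\ g) <= val_set (v i) (bundle A i).

Definition distribution (R : numDomainType) (T : finType) (p : T -> R) : Prop :=
  (forall x, 0 <= p x) /\ \sum_x p x = 1.

Definition ex_ante_EF (R : numDomainType) (n : nat) (G : finType)
    (v : 'I_n -> G -> R) (p : allocation n G -> R) : Prop :=
  forall i j : 'I_n,
    \sum_(A : allocation n G) p A * val_set (v i) (bundle A j)
      <= \sum_(A : allocation n G) p A * val_set (v i) (bundle A i).

Definition ex_post_EFX (R : numDomainType) (n : nat) (G : finType)
    (v : 'I_n -> G -> R) (p : allocation n G -> R) : Prop :=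
  forall A : allocation n G, 0 < p A -> EFX v A.

(* Main.v *)
Require Import Defs.
From HB Require Import structures.
From mathcomp Require Import all_boot all_order all_algebra.
From mathcomp Require Import ring lra.
Import Order.TTheory GRing.Theory Num.Theory.
Local Open Scope ring_scope.

Lemma I2rev (i j : 'I_2) : j != i -> j = rev_ord i.
Proof. by move: i j => [[|[|i]] Hi] [[|[|j]] Hj] //= H; apply/val_inj. Qed.
Lemma I2neq (i : 'I_2) : rev_ord i != i.
Proof. by move: i => [[|[|i]] Hi]. Qed.
Lemma I2cases (i : 'I_2) : i = ord0 \/ i = rev_ord ord0.
Proof. case: (eqVneq i ord0) => [->|/I2rev ->]; by [left|right]. Qed.

Section Aux.
Context {R : realFieldType} {G : finType}.
Implicit Types (u : G -> R) (A : allocation 2 G).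

Lemma val_bundleE u A k :
  val_set u (bundle A k) = \sum_g (if A g == k then u g else 0).
Proof. by rewrite /val_set big_mkcond; apply: eq_bigr => g _; rewrite inE. Qed.

Definition swap A : allocation 2 G := [ffun g => rev_ord (A g)].

Lemma bundle_swap A k : bundle (swap A) k = bundle A (rev_ord k).
Proof.
apply/setP => g; rewrite !inE ffunE.
by apply/eqP/eqP => [<-|->]; rewrite rev_ordK.
Qed.

Lemma val_setD1 u (S : {set G}) g : g \in S -> val_set u (S :\ g) = val_set u S - u g.
Proof. by move=> Hg; rewrite /val_set (big_setD1 _ Hg) /=; ring. Qed.

Lemma val_le_remove u (S : {set G}) g : nonneg_valuation u ->
  val_set u (S :\ g) <= val_set u S.
Proof.
move=> hu; case Hg: (g \in S).
  by rewrite val_setD1 //; have := hu g; lra.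
have -> : S :\ g = S; last by [].
by apply/setP => x; rewrite !inE; case: eqP => // ->; rewrite Hg.
Qed.

Definition efx_for u A := forall j k g, g \in bundle A k ->
  val_set u (bundle A k :\ g) <= val_set u (bundle A j).

Lemma efx_swap u A : efx_for u A -> efx_for u (swap A).
Proof. by move=> H j k g; rewrite !bundle_swap; apply: H. Qed.

Definition bal u A := `|val_set u (bundle A ord0) - val_set u (bundle A (rev_ord ord0))|.

Lemma bal_any u A k :
  `|val_set u (bundle A k) - val_set u (bundle A (rev_ord k))| = bal u A.
Proof. by case: (I2cases k) => ->; rewrite // rev_ordK distrC. Qed.

Lemma sum_split_at u A g k :
  \sum_h (if A h == k then u h else 0) =
  (if A g == k then u g else 0) + \sum_(h | h != g) (if A h == k then u h else 0).
Proof. by rewrite (bigD1 g). Qed.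

Lemma exists_balanced u : nonneg_valuation u ->
  exists P, efx_for u P /\ forall A, bal u P <= bal u A.
Proof.
move=> hu.
case: (arg_minP (bal u) (P:=predT) (isT : predT [ffun=> ord0])) => A _ Amin.
have {}Amin : forall B, bal u A <= bal u B by move=> B; apply: Amin.
have [i Hi] : exists i, val_set u (bundle A (rev_ord i)) <= val_set u (bundle A i).
  case: (lerP (val_set u (bundle A (rev_ord ord0))) (val_set u (bundle A ord0))) => H.
    by exists ord0.
  by exists (rev_ord ord0); rewrite rev_ordK; apply: ltW.
pose P : allocation 2 G :=
  [ffun g => if (A g == i) && (u g == 0) then rev_ord i else A g].
have F2 : forall k, val_set u (bundle P k) = val_set u (bundle A k).
  move=> k; rewrite !val_bundleE; apply: eq_bigr => g _; rewrite ffunE.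
  by case: (boolP ((A g == i) && (u g == 0))) => [/andP [_ /eqP ->]|_]; rewrite ?if_same.
have F3 : forall g, g \in bundle P i -> A g = i /\ u g != 0.
  move=> g; rewrite inE ffunE.
  case: (boolP ((A g == i) && (u g == 0))) => [_ /eqP Hc|Hn /eqP Ag].
    by move: (I2neq i); rewrite Hc eqxx.
  by split => //; move: Hn; rewrite Ag eqxx.
exists P; split; last first.
  by move=> B; rewrite /bal !F2; apply: Amin.
move=> j k g Hg.
case: (eqVneq k j) => [<-|/I2rev Hj]; first exact: val_le_remove.
case: (eqVneq k i) => [Hk|/I2rev Hk].
- rewrite Hk in Hj Hg; have -> : j = rev_ord i by rewrite Hj rev_ordK.
  rewrite Hk; clear k Hk Hj; have [Ag ug] := F3 _ Hg.
  have ugp : 0 < u g by rewrite lt_def ug hu.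
  rewrite val_setD1 // !F2.
  rewrite leNgt; apply/negP => Hc.
  pose A' : allocation 2 G := [ffun h => if h == g then rev_ord i else A h].
  have E : forall k, val_set u (bundle A' k) - (if rev_ord i == k then u g else 0)
      = val_set u (bundle A k) - (if A g == k then u g else 0).
    move=> k; rewrite !val_bundleE (sum_split_at u A' g) (sum_split_at u A g).
    rewrite ffunE eqxx.
    have -> : \sum_(h | h != g) (if A' h == k then u h else 0) =
              \sum_(h | h != g) (if A h == k then u h else 0).
      by apply: eq_bigr => h /negbTE Hh; rewrite ffunE Hh.
    by set s := \sum_(h | _) _; rewrite addrC addrA addNr add0r addrC addKr.
  have E1 := E i; have E2 := E (rev_ord i).
  rewrite Ag eqxx (negbTE (I2neq i)) in E1.
  rewrite Ag eqxx eq_sym (negbTE (I2neq i)) in E2.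
  have := Amin A'; rewrite -(bal_any u A i) -(bal_any u A' i).
  rewrite ger0_norm; last by lra.
  have : `|val_set u (bundle A' i) - val_set u (bundle A' (rev_ord i))| <
         val_set u (bundle A i) - val_set u (bundle A (rev_ord i)).
    rewrite ltr_norml; apply/andP; split; lra.
  lra.
- rewrite Hk in Hj Hg *; have -> : j = i by rewrite -(rev_ordK j) -Hj rev_ordK.
  apply: le_trans (val_le_remove _ _ _ hu) _.
  by rewrite !F2.
Qed.

Definition chooser (c : 'I_2) u (Q : allocation 2 G) : allocation 2 G :=
  if val_set u (bundle Q (rev_ord c)) <= val_set u (bundle Q c) then Q else swap Q.

Lemma chooser_pref c u Q :
  val_set u (bundle (chooser c u Q) c) - val_set u (bundle (chooser c u Q) (rev_ord c))
  = `|val_set u (bundle Q c) - val_set u (bundle Q (rev_ord c))|.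
Proof.
rewrite /chooser; case: ifP => H.
  by rewrite ger0_norm // subr_ge0.
rewrite !bundle_swap rev_ordK ltr0_norm; first by rewrite opprB.
by rewrite subr_lt0 ltNge H.
Qed.

Lemma chooser_ge c u Q :
  val_set u (bundle (chooser c u Q) (rev_ord c)) <= val_set u (bundle (chooser c u Q) c).
Proof. by rewrite -subr_ge0 chooser_pref normr_ge0. Qed.

Lemma chooser_low c w u Q k :
  - `|val_set u (bundle Q k) - val_set u (bundle Q (rev_ord k))| <=
  val_set u (bundle (chooser c w Q) k) - val_set u (bundle (chooser c w Q) (rev_ord k)).
Proof.
set x := val_set u (bundle Q k) - val_set u (bundle Q (rev_ord k)).
have h1 := ler_norm x; have h2 := ler_norm (- x); rewrite normrN in h2.
rewrite /x in h1 h2; rewrite /chooser; case: ifP => _; first lra.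
rewrite !bundle_swap rev_ordK; lra.
Qed.

Lemma efx_chooser c w u Q : efx_for u Q -> efx_for u (chooser c w Q).
Proof. by rewrite /chooser; case: ifP => // _; apply: efx_swap. Qed.

Lemma sum1 (F : allocation 2 G -> R) a :
  \sum_A ((A == a)%:R * F A) = F a.
Proof.
rewrite (bigD1 a) //= eqxx mul1r big1 ?addr0 // => A /negbTE ->.
by rewrite mul0r.
Qed.

Lemma sum_p (F : allocation 2 G -> R) a b :
  \sum_A (2^-1 * ((A == a)%:R + (A == b)%:R)) * F A = 2^-1 * (F a + F b).
Proof.
rewrite (eq_bigr (fun A => 2^-1 * ((A == a)%:R * F A) + 2^-1 * ((A == b)%:R * F A))).
  by rewrite big_split /= -!mulr_sumr !sum1 mulrDr.
by move=> A _; ring.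
Qed.

End Aux.

Theorem proposition1 (R : realFieldType) (G : finType) (v : 'I_2 -> G -> R)
  (hv : forall i, nonneg_valuation (v i)) :
  exists p : allocation 2 G -> R,
    [/\ distribution p, ex_ante_EF v p & ex_post_EFX v p].
Proof.
have [P HP] := fin_all_exists (fun k => @exists_balanced R G (v k) (hv k)).
pose alloc k := chooser (rev_ord k) (v (rev_ord k)) (P k).
have efx_alloc : forall k, EFX v (alloc k).
  move=> k i j g Hg.
  case: (eqVneq i k) => [->|/I2rev Hi].
    exact: (efx_chooser _ _ _ _ (HP k).1 _ _ _ Hg).
  apply: le_trans (val_le_remove _ _ _ (hv i)) _.
  case: (eqVneq j i) => [->|/I2rev Hj]; first by [].
  by rewrite Hj Hi; apply: chooser_ge.
pose a := alloc ord0; pose b := alloc (rev_ord ord0).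
exists (fun A => 2^-1 * ((A == a)%:R + (A == b)%:R)); split.
- split.
    by move=> A; apply: mulr_ge0; [rewrite invr_ge0 ler0n | apply: addr_ge0; apply: ler0n].
  rewrite (eq_bigr (fun A => 2^-1 * ((A == a)%:R + (A == b)%:R) * 1)); last first.
    by move=> A _; rewrite mulr1.
  by rewrite (sum_p (fun _ => 1)) -[1 + 1]/(2%:R : R) mulVf // pnatr_eq0.
- move=> i j; rewrite !sum_p.
  case: (eqVneq j i) => [->|/I2rev ->]; first by [].
  suff H : forall F : allocation 2 G -> R,
      2^-1 * (F a + F b) = 2^-1 * (F (alloc i) + F (alloc (rev_ord i))).
    rewrite (H (fun A => val_set (v i) (bundle A (rev_ord i)))) (H (fun A => val_set (v i) (bundle A i))) /=.
    have L1 := chooser_low (rev_ord i) (v (rev_ord i)) (v i) (P i) i.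
    have L2 := chooser_pref i (v i) (P (rev_ord i)).
    rewrite /alloc rev_ordK.
    rewrite (bal_any (v i) (P i) i) in L1.
    rewrite (bal_any (v i) (P (rev_ord i)) i) in L2.
    have M := (HP i).2 (P (rev_ord i)).
    rewrite /alloc in L1.
    set x1 := val_set (v i) (bundle (chooser (rev_ord i) (v (rev_ord i)) (P i)) i) in L1 *.
    set y1 := val_set (v i) (bundle (chooser (rev_ord i) (v (rev_ord i)) (P i)) (rev_ord i)) in L1 *.
    set x2 := val_set (v i) (bundle (chooser i (v i) (P (rev_ord i))) i) in L2 *.
    set y2 := val_set (v i) (bundle (chooser i (v i) (P (rev_ord i))) (rev_ord i)) in L2 *.
    have h2 : 0 <= 2^-1 :> R by rewrite invr_ge0 ler0n.
    rewrite -subr_ge0 -mulrBr; apply: mulr_ge0 => //; lra.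
  move=> F; case: (I2cases i) => ->; first by [].
  by rewrite rev_ordK addrC.
- move=> A HA.
  case: (eqVneq A a) => [->|Ha]; first exact: efx_alloc.
  case: (eqVneq A b) => [->|Hb]; first exact: efx_alloc.
  by move: HA; rewrite (negbTE Ha) (negbTE Hb) addr0 mulr0 ltxx.
Qed.
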